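(* If $R=X^\dagger X$ with $X=\bigoplus_k(I_{\mathcal H_k}\otimes X_k)\in\mathcal A'_G$ is extremal in $\mathcal C_{K_0}$ and $S=\{k:X_k\ne0\}$, then $\sum_{k\in S}\operatorname{rank}(X_k)^2\le\dim(\mathcal H)^2$.
   Context: Let $\mathcal H,\mathcal K$ be finite-dimensional Hilbert spaces and $g\mapsto U_g$, $g\mapsto V_g$ unitary representations of a group $G$ on $\mathcal H$ and $\mathcal K$; $U_g^*$ is the complex conjugate in a fixed basis. Decompose $\mathcal K\otimes\mathcal H=\bigoplus_k(\mathcal H_k\otimes\mathbb C^{m_k})$ according to the equivalence classes $k$ of irreducible components of $V_g\otimes U_g^*$ (irreducible space $\mathcal H_k$, multiplicity $m_k$). The commutant $\mathcal A'_G$ consists of operators $\bigoplus_k(I_{\mathcal H_k}\otimes M_k)$. Fix $0\le K_0\le I_{\mathcal H}$ and let $\mathcal C_{K_0}=\{R\in\mathcal A'_G: R\ge0,\ \operatorname{Tr}_{\mathcal K}[R]=K_0\}$. *)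

(* Defs.v *)
(* Scalars: an arbitrary numClosedFieldType C (e.g. the complex
   numbers, 'complex R' for R a real closed field); operators on C^n are
   square matrices acting on column vectors. *)
From HB Require Import structures.
From mathcomp Require Import all_boot all_order all_algebra.
From mathcomp Require Import mxtens.
Set Implicit Arguments.
Unset Strict Implicit.
Unset Printing Implicit Defensive.
Import Order.TTheory GRing.Theory Num.Theory.
Local Open Scope ring_scope.

Section Defs.
Variable C : numClosedFieldType.

Definition adjmx m n (A : 'M[C]_(m, n)) : 'M[C]_(n, m) := (map_mx Num.conj A)^T.

Definition conjmx m n (A : 'M[C]_(m, n)) : 'M[C]_(m, n) := map_mx Num.conj A.

Definition psdmx n (A : 'M[C]_n) : Prop :=
  forall v : 'cV[C]_n, 0 <= (adjmx v *m A *m v) 0 0.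

Definition unitarymx n (U : 'M[C]_n) : Prop := adjmx U *m U = 1%:M.

(* Partial trace over the first tensor factor K (dimension e) of K (x) H. *)
Definition ptraceK e d (R : 'M[C]_(e * d)) : 'M[C]_d :=
  \matrix_(a, b) \sum_(i < e) R (mxtens_index (i, a)) (mxtens_index (i, b)).

Record is_group (G : Type) (mul : G -> G -> G) (one : G) (inv : G -> G) : Prop := {
  grp_assoc : forall x y z, mul x (mul y z) = mul (mul x y) z;
  grp_mul1 : forall x, mul one x = x;
  grp_mulV : forall x, mul (inv x) x = one }.

Definition unitary_rep (G : Type) (mul : G -> G -> G) n (rho : G -> 'M[C]_n) : Prop :=
  (forall g, unitarymx (rho g)) /\ (forall g h, rho (mul g h) = rho g *m rho h).

(* Irreducible: nonzero space with no invariant subspace other than 0 and the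
   whole space (subspaces = row spaces of matrices, vectors written as rows,
   so v |-> rho g v reads v^T |-> v^T (rho g)^T). *)
Definition irreducible_rep (G : Type) n (rho : G -> 'M[C]_n) : Prop :=
  (0 < n)%N /\
  forall A : 'M[C]_n, (forall g, (A *m (rho g)^T <= A)%MS) ->
     A = 0 \/ row_full A.

Definition equiv_rep (G : Type) n1 n2 (rho1 : G -> 'M[C]_n1) (rho2 : G -> 'M[C]_n2)
  : Prop :=
  exists (T : 'M[C]_(n1, n2)) (T' : 'M[C]_(n2, n1)),
    T *m T' = 1%:M /\ T' *m T = 1%:M /\ forall g, rho1 g *m T = T *m rho2 g.

(* Decomposition  K (x) H = (+)_k (H_k (x) C^{m_k})  of the representation
   g |-> V_g (x) U_g^*  into isotypic components: W k is an isometry from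
   H_k (x) C^{m_k} (H_k = C^{dk k}) into K (x) H, the ranges are mutually
   orthogonal and span K (x) H, W k intertwines pi k (x) I with V (x) U^*,
   each pi k is an irreducible unitary representation, distinct k give
   inequivalent representations, and every multiplicity is positive. *)
Definition isotypic_decomposition (G : Type) (mul : G -> G -> G) d e
  (U : G -> 'M[C]_d) (V : G -> 'M[C]_e) (n : nat) (dk mk : 'I_n -> nat)
  (pi : forall k, G -> 'M[C]_(dk k)) (W : forall k, 'M[C]_(e * d, dk k * mk k))
  : Prop :=
  [/\ forall k, unitary_rep mul (pi k) /\ irreducible_rep (pi k),
      forall k l, k != l -> ~ equiv_rep (pi k) (pi l)
    & forall k, (0 < mk k)%N] /\
  [/\ forall k, adjmx (W k) *m W k = 1%:M,
      forall k l, k != l -> adjmx (W k) *m W l = 0,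
      \sum_(k < n) W k *m adjmx (W k) = 1%:M
    & forall k g, (V g *t conjmx (U g)) *m W k = W k *m (pi k g *t 1%:M)].

(* The operator  (+)_k (I_{H_k} (x) M_k)  on K (x) H. *)
Definition commutant_elt e d n (dk mk : 'I_n -> nat)
  (W : forall k, 'M[C]_(e * d, dk k * mk k)) (M : forall k, 'M[C]_(mk k))
  : 'M[C]_(e * d) :=
  \sum_(k < n) W k *m ((1%:M : 'M[C]_(dk k)) *t M k) *m adjmx (W k).

Definition in_commutant e d n (dk mk : 'I_n -> nat)
  (W : forall k, 'M[C]_(e * d, dk k * mk k)) (R : 'M[C]_(e * d)) : Prop :=
  exists M : forall k, 'M[C]_(mk k), R = commutant_elt W M.

Definition CK0 e d n (dk mk : 'I_n -> nat)
  (W : forall k, 'M[C]_(e * d, dk k * mk k)) (K0 : 'M[C]_d) (R : 'M[C]_(e * d))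
  : Prop :=
  [/\ in_commutant W R, psdmx R & ptraceK R = K0].

Definition extremal m (S : 'M[C]_m -> Prop) (R : 'M[C]_m) : Prop :=
  S R /\ forall (R1 R2 : 'M[C]_m) (t : C), S R1 -> S R2 -> 0 < t < 1 ->
    R = t *: R1 + (1 - t) *: R2 -> R1 = R.

End Defs.

(* Main.v *)
Require Import Defs.
From HB Require Import structures.
From mathcomp Require Import all_boot all_order all_algebra.
From mathcomp Require Import mxtens.
Import Order.TTheory GRing.Theory Num.Theory.
Local Open Scope ring_scope.
Set Implicit Arguments.
Unset Strict Implicit.

Section Aux.
Variable C : numClosedFieldType.

Lemma adjmxE m n (A : 'M[C]_(m, n)) i j : adjmx A i j = (A j i)^*.
Proof. by rewrite !mxE. Qed.

Lemma adjmxK m n (A : 'M[C]_(m, n)) : adjmx (adjmx A) = A.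
Proof. by apply/matrixP=> i j; rewrite !mxE conjCK. Qed.

Lemma adjmxM m n p (A : 'M[C]_(m, n)) (B : 'M[C]_(n, p)) :
  adjmx (A *m B) = adjmx B *m adjmx A.
Proof. by rewrite /adjmx map_mxM trmx_mul. Qed.

Lemma adjmxD m n (A B : 'M[C]_(m, n)) : adjmx (A + B) = adjmx A + adjmx B.
Proof. by apply/matrixP=> i j; rewrite !mxE rmorphD. Qed.

Lemma adjmxZ m n (a : C) (A : 'M[C]_(m, n)) : adjmx (a *: A) = a^* *: adjmx A.
Proof. by apply/matrixP=> i j; rewrite !mxE rmorphM. Qed.

Lemma adjmxN m n (A : 'M[C]_(m, n)) : adjmx (- A) = - adjmx A.
Proof. by apply/matrixP=> i j; rewrite !mxE rmorphN. Qed.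

Lemma adjmx0 m n : adjmx (0 : 'M[C]_(m, n)) = 0.
Proof. by apply/matrixP=> i j; rewrite !mxE rmorph0. Qed.

Lemma adjmx1 m : adjmx (1%:M : 'M[C]_m) = 1%:M.
Proof. by apply/matrixP=> i j; rewrite !mxE eq_sym rmorph_nat. Qed.

Lemma adjmx_sum m n (I : finType) (F : I -> 'M[C]_(m, n)) :
  adjmx (\sum_i F i) = \sum_i adjmx (F i).
Proof.
apply/matrixP=> i j; rewrite !mxE !summxE rmorph_sum.
by apply: eq_bigr=> k _; rewrite !mxE.
Qed.

Lemma adjmx_tens m n p q (A : 'M[C]_(m, n)) (B : 'M[C]_(p, q)) :
  adjmx (A *t B) = adjmx A *t adjmx B.
Proof. by rewrite /adjmx (map_mxT Num.conj_op) trmx_tens. Qed.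

Lemma tensmxDr m n p q (A : 'M[C]_(m, n)) (B B' : 'M[C]_(p, q)) :
  A *t (B + B') = A *t B + A *t B'.
Proof. by apply/matrixP=> i j; rewrite !mxE mulrDr. Qed.

Lemma tensmxZr m n p q (A : 'M[C]_(m, n)) (a : C) (B : 'M[C]_(p, q)) :
  A *t (a *: B) = a *: (A *t B).
Proof. by apply/matrixP=> i j; rewrite !mxE mulrCA. Qed.

Lemma tensmx11 m p : (1%:M : 'M[C]_m) *t (1%:M : 'M[C]_p) = 1%:M.
Proof.
apply/matrixP=> i j.
case: (mxtens_indexP i)=> a b; case: (mxtens_indexP j)=> c d.
rewrite tensmxE !mxE (can_eq (@mxtens_indexK _ _)) xpair_eqE.
by case: (a == c); case: (b == d); rewrite /= ?mulr1 ?mulr0 ?mul0r.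
Qed.

Lemma ptraceKD e d (A B : 'M[C]_(e * d)) : ptraceK (A + B) = ptraceK A + ptraceK B.
Proof. by apply/matrixP=> i j; rewrite !mxE -big_split; apply: eq_bigr=> k _; rewrite mxE. Qed.

Lemma ptraceKZ e d (a : C) (A : 'M[C]_(e * d)) : ptraceK (a *: A) = a *: ptraceK A.
Proof. by apply/matrixP=> i j; rewrite !mxE mulr_sumr; apply: eq_bigr=> k _; rewrite mxE. Qed.

Lemma ptraceK_adj e d (A : 'M[C]_(e * d)) : ptraceK (adjmx A) = adjmx (ptraceK A).
Proof.
apply/matrixP=> i j; rewrite !mxE rmorph_sum; apply: eq_bigr=> k _; by rewrite !mxE.
Qed.

Lemma ptraceK_sum e d (I : finType) (F : I -> 'M[C]_(e * d)) :
  ptraceK (\sum_i F i) = \sum_i ptraceK (F i).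
Proof.
apply/matrixP=> i j; rewrite summxE mxE.
under eq_bigr do rewrite summxE.
rewrite exchange_big /=; apply: eq_bigr=> k _; by rewrite mxE.
Qed.

End Aux.
Section Psd.
Variable C : numClosedFieldType.

Lemma psd_sum m (I : finType) (F : I -> 'M[C]_m) :
  (forall i, psdmx (F i)) -> psdmx (\sum_i F i).
Proof.
move=> H v; rewrite mulmx_sumr mulmx_suml summxE.
by apply: sumr_ge0=> i _; apply: H.
Qed.

Lemma psd_congr p q (A : 'M[C]_q) (B : 'M[C]_(p, q)) :
  psdmx A -> psdmx (B *m A *m adjmx B).
Proof.
move=> H v; have := H (adjmx B *m v).
by rewrite adjmxM adjmxK !mulmxA.
Qed.

Definition cst m (H : 'M[C]_m) := \sum_i \sum_j `|H i j|.

Lemma psd_pert m (H : 'M[C]_m) (a : C) :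
  adjmx H = H -> a \is Num.real -> `|a| * cst H <= 1 ->
  psdmx (1%:M + a *: H).
Proof.
move=> hH ar ac v.
rewrite mulmxDr mulmx1 mulmxDl -scalemxAr -scalemxAl.
set S := (adjmx v *m v) 0 0; set t := (adjmx v *m H *m v) 0 0.
have -> : (adjmx v *m v + a *: (adjmx v *m H *m v)) 0 0 = S + a * t by rewrite /S /t !mxE.
have SE : S = \sum_i `|v i 0| ^+ 2.
  rewrite /S mxE; apply: eq_bigr=> i _; by rewrite !mxE normCK mulrC.
have S0 : 0 <= S by rewrite SE; apply: sumr_ge0=> i _; apply: exprn_ge0.
have Si : forall i, `|v i 0| ^+ 2 <= S.
  move=> i; rewrite SE (bigD1 i) //= ler_wpDr //.
  by apply: sumr_ge0=> j _; apply: exprn_ge0.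
have Sij : forall i j, `|v i 0| * `|v j 0| <= S.
  move=> i j; case/orP: (ger_leVge (normr_ge0 (v i 0)) (normr_ge0 (v j 0))) => h.
    apply: le_trans (Si j); rewrite expr2; exact: ler_wpM2r.
  apply: le_trans (Si i); rewrite expr2; exact: ler_wpM2l.
have tr : t \is Num.real.
  rewrite CrealE; apply/eqP.
  rewrite /t -adjmxE adjmxM adjmxM hH adjmxK mulmxA //.
have tb : `|t| <= cst H * S.
  rewrite /t mxE.
  apply: le_trans (ler_norm_sum _ _ _) _.
  rewrite /cst mulr_suml; under [X in _ <= X]eq_bigr do rewrite mulr_suml.
  rewrite [X in _ <= X]exchange_big /=.
  apply: ler_sum=> j _; rewrite mxE normrM.
  apply: (@le_trans _ _ ((\sum_i `|adjmx v 0 i * H i j|) * `|v j 0|)).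
    by apply: ler_pM => //; apply: ler_norm_sum.
  rewrite mulr_suml; apply: ler_sum=> i _.
  rewrite !mxE normrM norm_conjC mulrAC mulrC.
  by apply: ler_wpM2l => //; exact: Sij.
have atb : `|a * t| <= S.
  rewrite normrM; apply: le_trans (_ : `|a| * (cst H * S) <= S).
    by apply: ler_wpM2l.
  by rewrite mulrA; apply: le_trans (ler_wpM2r S0 ac) _; rewrite mul1r.
have := real_lerNnormlW (rpredM ar tr) atb.
by rewrite -subr_ge0 opprK addrC.
Qed.

End Psd.
Section Comm.
Variables (C : numClosedFieldType) (e d n : nat) (dk mk : 'I_n -> nat).
Variable W : forall k, 'M[C]_(e * d, dk k * mk k).
Local Notation Wc := (commutant_elt W).

Lemma eq_Wc (A B : forall k, 'M[C]_(mk k)) : (forall k, A k = B k) -> Wc A = Wc B.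
Proof. by move=> h; apply: eq_bigr=> k _; rewrite h. Qed.

Lemma WcD (A B : forall k, 'M[C]_(mk k)) :
  Wc (fun k => A k + B k) = Wc A + Wc B.
Proof.
rewrite /commutant_elt -big_split; apply: eq_bigr=> k _.
by rewrite tensmxDr mulmxDr mulmxDl.
Qed.

Lemma WcZ (a : C) (A : forall k, 'M[C]_(mk k)) :
  Wc (fun k => a *: A k) = a *: Wc A.
Proof.
rewrite /commutant_elt scaler_sumr; apply: eq_bigr=> k _.
by rewrite tensmxZr -scalemxAr -scalemxAl.
Qed.

Lemma Wc_adj (A : forall k, 'M[C]_(mk k)) : adjmx (Wc A) = Wc (fun k => adjmx (A k)).
Proof.
rewrite /commutant_elt adjmx_sum; apply: eq_bigr=> k _.
by rewrite !adjmxM adjmxK adjmx_tens adjmx1 mulmxA.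
Qed.

Lemma psd_Wc (A : forall k, 'M[C]_(mk k)) :
  (forall k, psdmx ((1%:M : 'M[C]_(dk k)) *t A k)) -> psdmx (Wc A).
Proof. by move=> h; apply: psd_sum=> k; apply: psd_congr. Qed.

Hypothesis Wiso : forall k, adjmx (W k) *m W k = 1%:M.
Hypothesis Worth : forall k l, k != l -> adjmx (W k) *m W l = 0.

Lemma Wc_proj (A : forall k, 'M[C]_(mk k)) k :
  adjmx (W k) *m Wc A *m W k = (1%:M : 'M[C]_(dk k)) *t A k.
Proof.
rewrite /commutant_elt mulmx_sumr mulmx_suml (bigD1 k) //= big1.
  by rewrite addr0 !mulmxA Wiso mul1mx -mulmxA Wiso mulmx1.
move=> l nlk; rewrite !mulmxA Worth 1?eq_sym // !mul0mx //.
Qed.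

Lemma Wsand k (X Y : 'M[C]_(dk k * mk k)) :
  W k *m X *m adjmx (W k) *m (W k *m Y *m adjmx (W k)) = W k *m (X *m Y) *m adjmx (W k).
Proof. by rewrite -!mulmxA (mulmxA (adjmx (W k)) (W k)) Wiso mul1mx. Qed.

Lemma Wsand0 k l (X : 'M[C]_(dk k * mk k)) (Y : 'M[C]_(dk l * mk l)) : k != l ->
  W k *m X *m adjmx (W k) *m (W l *m Y *m adjmx (W l)) = 0.
Proof. by move=> h; rewrite -!mulmxA (mulmxA (adjmx (W k)) (W l)) Worth // !(mul0mx, mulmx0). Qed.

Lemma WcM (A B : forall k, 'M[C]_(mk k)) :
  Wc A *m Wc B = Wc (fun k => A k *m B k).
Proof.
rewrite {1}/commutant_elt mulmx_suml; apply: eq_bigr=> k _.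
rewrite /commutant_elt mulmx_sumr (bigD1 k) //= big1.
  by rewrite addr0 Wsand tensmx_mul mul1mx.
by move=> l nlk; rewrite Wsand0 // eq_sym.
Qed.

End Comm.
Section Key.
Variables (C : numClosedFieldType) (e d n : nat) (dk mk : 'I_n -> nat).
Variable W : forall k, 'M[C]_(e * d, dk k * mk k).
Variables (X : forall k, 'M[C]_(mk k)) (K0 : 'M[C]_d).
Local Notation Wc := (commutant_elt W).
Hypothesis Wiso : forall k, adjmx (W k) *m W k = 1%:M.
Hypothesis Worth : forall k l, k != l -> adjmx (W k) *m W l = 0.
Hypothesis dkpos : forall k, (0 < dk k)%N.
Hypothesis Hext : extremal (CK0 W K0) (adjmx (Wc X) *m Wc X).

Lemma WcN (A : forall k, 'M[C]_(mk k)) : Wc (fun k => - A k) = - Wc A.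
Proof.
rewrite -scaleN1r -WcZ; apply: eq_Wc=> k; by rewrite scaleN1r.
Qed.

Lemma tens1_eq0 k (Z : 'M[C]_(mk k)) : (1%:M : 'M[C]_(dk k)) *t Z = 0 -> Z = 0.
Proof.
move=> h; apply/matrixP=> p q.
have /matrixP/(_ (mxtens_index (Ordinal (dkpos k), p)) (mxtens_index (Ordinal (dkpos k), q))) := h.
by rewrite tensmxE !mxE eqxx mul1r.
Qed.

Lemma cst_ge0 m (H : 'M[C]_m) : 0 <= cst H.
Proof. by apply: sumr_ge0=> i _; apply: sumr_ge0=> j _; apply: normr_ge0. Qed.

Lemma herm_key (D : forall k, 'M[C]_(mk k)) :
  (forall k, adjmx (D k) = D k) ->
  ptraceK (Wc (fun k => adjmx (X k) *m D k *m X k)) = 0 ->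
  forall k, adjmx (X k) *m D k *m X k = 0.
Proof.
move=> hD h0.
set R := Wc (fun k => adjmx (X k) *m X k).
set R' := Wc (fun k => adjmx (X k) *m D k *m X k).
have Rdef : adjmx (Wc X) *m Wc X = R by rewrite Wc_adj WcM.
case: Hext; rewrite Rdef => -[_ _ trR] ext.
pose c := \sum_k cst ((1%:M : 'M[C]_(dk k)) *t D k).
have c0 : 0 <= c by apply: sumr_ge0=> k _; apply: cst_ge0.
pose eps := (1 + c)^-1.
have c1 : 0 < 1 + c by apply: ltr_wpDr.
have eps0 : 0 < eps by rewrite invr_gt0.
have Ra : forall a, a \is Num.real -> `|a| <= eps ->
    CK0 W K0 (R + a *: R').
  move=> a ar ae.
  have RaE : R + a *: R' = Wc (fun k => adjmx (X k) *m (1%:M + a *: D k) *m X k).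
    rewrite /R /R' -WcZ -WcD; apply: eq_Wc=> k.
    by rewrite mulmxDr mulmx1 mulmxDl -scalemxAr -scalemxAl.
  split.
  - by rewrite RaE; eexists.
  - rewrite RaE; apply: psd_Wc=> k.
    have -> : (1%:M : 'M[C]_(dk k)) *t (adjmx (X k) *m (1%:M + a *: D k) *m X k) =
      adjmx ((1%:M : 'M[C]_(dk k)) *t X k) *m (1%:M + a *: ((1%:M : 'M[C]_(dk k)) *t D k))
        *m ((1%:M : 'M[C]_(dk k)) *t X k).
      by rewrite adjmx_tens adjmx1 -tensmx11 -tensmxZr -tensmxDr !tensmx_mul !mul1mx.
    rewrite -{2}[(1%:M *t X k)]adjmxK; apply: psd_congr; apply: psd_pert => //.
      by rewrite adjmx_tens adjmx1 hD.
    apply: le_trans (ler_wpM2r (cst_ge0 _) ae) _.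
    rewrite -[X in _ <= X](mulVf (lt0r_neq0 c1)) ler_wpM2l //; first exact: ltW.
    have ck : cst ((1%:M : 'M[C]_(dk k)) *t D k) <= c.
      rewrite /c (bigD1 k) //= lerDl.
      by apply: sumr_ge0=> l _; apply: cst_ge0.
    by apply: le_trans ck _; rewrite lerDr ler01.
  - by rewrite ptraceKD ptraceKZ h0 scaler0 addr0.
have ee : `|eps| <= eps by rewrite ger0_norm // ltW.
have C1 := Ra eps (gtr0_real eps0) ee.
have ee2 : `|- eps| <= eps by rewrite normrN.
have er : - eps \is Num.real by rewrite rpredN gtr0_real.
have C2 := Ra (- eps) er ee2.
have t01 : 0 < (2^-1 : C) < 1.
  by rewrite invr_gt0 ltr0n /= invf_lt1 ?ltr0n // ltr1n.
have := ext _ _ _ C1 C2 t01.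
have half : 1 - 2^-1 = 2^-1 :> C.
  apply: (@mulfI _ 2); first by rewrite pnatr_eq0.
  by rewrite mulrBr mulr1 divff ?pnatr_eq0 // -[2]/(1 + 1) addrK.
rewrite half -scalerDr addrACA scaleNr addrN addr0 -mulr2n.
rewrite -scaler_nat scalerA mulVf ?pnatr_eq0 // scale1r.
move=> /(_ erefl) /eqP; rewrite -subr_eq0 addrC addKr scaler_eq0.
rewrite (negPf (lt0r_neq0 eps0)) /= => /eqP hR' k.
apply: tens1_eq0.
have := Wc_proj Wiso Worth (fun k => adjmx (X k) *m D k *m X k) k.
by rewrite -/R' hR' mulmx0 mul0mx /= => <-.
Qed.

Lemma cplx_key (Y : forall k, 'M[C]_(mk k)) :
  ptraceK (Wc (fun k => adjmx (X k) *m Y k *m X k)) = 0 ->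
  forall k, adjmx (X k) *m Y k *m X k = 0.
Proof.
move=> h0.
set Z := Wc (fun k => adjmx (X k) *m Y k *m X k).
have Z' : Wc (fun k => adjmx (X k) *m adjmx (Y k) *m X k) = adjmx Z.
  by rewrite /Z Wc_adj; apply: eq_Wc=> k; rewrite !adjmxM adjmxK mulmxA.
have tZ' : ptraceK (adjmx Z) = 0 by rewrite ptraceK_adj h0 adjmx0.
have h1 := herm_key (D := fun k => Y k + adjmx (Y k)).
have h2 := herm_key (D := fun k => 'i *: (Y k - adjmx (Y k))).
move=> k.
have e1 : adjmx (X k) *m (Y k + adjmx (Y k)) *m X k = 0.
  apply: h1 => [l|]; first by rewrite adjmxD adjmxK addrC.
  have -> : Wc (fun k => adjmx (X k) *m (Y k + adjmx (Y k)) *m X k) = Z + adjmx Z.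
    rewrite -Z' /Z -WcD; apply: eq_Wc=> l; by rewrite mulmxDr mulmxDl.
  by rewrite ptraceKD h0 tZ' addr0.
have e2 : adjmx (X k) *m ('i *: (Y k - adjmx (Y k))) *m X k = 0.
  apply: h2 => [l|].
    by rewrite adjmxZ conjCi adjmxD adjmxN adjmxK scaleNr -scalerN opprB addrC.
  have -> : Wc (fun k => adjmx (X k) *m ('i *: (Y k - adjmx (Y k))) *m X k)
      = 'i *: (Z - adjmx Z).
    rewrite -Z' /Z -WcN -WcD -WcZ; apply: eq_Wc=> l.
    by rewrite -scalemxAr -scalemxAl mulmxDr mulmxDl mulmxN mulNmx.
  by rewrite ptraceKZ ptraceKD -scaleN1r ptraceKZ h0 tZ' !(scaler0, addr0).
have : (2%:R : C) *: (adjmx (X k) *m Y k *m X k) = 0.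
  move: e1 e2; rewrite mulmxDr mulmxDl -scalemxAr -scalemxAl.
  rewrite mulmxDr mulmxDl mulmxN mulNmx => e1 e2.
  have e3 : 'i *: ('i *: (adjmx (X k) *m Y k *m X k - adjmx (X k) *m adjmx (Y k) *m X k)) = 0.
    by rewrite e2 scaler0.
  rewrite scalerA -expr2 sqrCi scaleN1r opprB in e3.
  rewrite scaler_nat mulr2n.
  set a := adjmx (X k) *m Y k *m X k in e1 e3 *.
  set b := adjmx (X k) *m adjmx (Y k) *m X k in e1 e3 *.
  have -> : a + a = (a + b) - (b - a) by rewrite opprB addrACA addrN addr0.
  by rewrite e1 e3 subrr.
by move/eqP; rewrite scaler_eq0 pnatr_eq0 /= => /eqP.
Qed.

End Key.
Lemma mul_rV_lin1_gen (C : fieldType) m n (f : 'rV[C]_m -> 'rV[C]_n) :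
  (forall x y, f (x + y) = f x + f y) -> (forall a x, f (a *: x) = a *: f x) ->
  forall u, u *m lin1_mx f = f u.
Proof.
move=> fD fZ u.
have f0 : f 0 = 0 by rewrite -(scale0r 0) fZ scale0r.
rewrite [u in RHS]matrix_sum_delta big_ord1 (big_morph f fD f0); apply/rowP=> i.
by rewrite mxE summxE; apply: eq_bigr => j _; rewrite fZ !mxE.
Qed.

Section Count.
Local Unset Implicit Arguments.
Variables (C : numClosedFieldType) (e d n : nat) (dk mk : 'I_n -> nat).
Variable W : forall k, 'M[C]_(e * d, dk k * mk k).
Variables (X : forall k, 'M[C]_(mk k)).
Local Notation Wc := (commutant_elt W).
Hypothesis key : forall Y : forall k, 'M[C]_(mk k),
  ptraceK (Wc (fun k => adjmx (X k) *m Y k *m X k)) = 0 ->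
  forall k, adjmx (X k) *m Y k *m X k = 0.

Let r k := \rank (X k).
Let Q k : 'M[C]_(r k, mk k) := pid_mx (r k) *m invmx (col_ebase (X k)).
Let Q2 k : 'M[C]_(mk k, r k) := invmx (row_ebase (X k)) *m pid_mx (r k).

Lemma QXQ2_gen m (A : 'M[C]_m) :
  (pid_mx (\rank A) *m invmx (col_ebase A) : 'M_(\rank A, m)) *m A *m (invmx (row_ebase A) *m pid_mx (\rank A))
  = 1%:M.
Proof.
transitivity ((pid_mx (\rank A) *m invmx (col_ebase A) : 'M_(\rank A, m)) *m
  (col_ebase A *m pid_mx (\rank A) *m row_ebase A) *m
  (invmx (row_ebase A) *m pid_mx (\rank A) : 'M_(m, \rank A))).
  by rewrite mulmx_ebase.
rewrite !mulmxA.
rewrite -[_ *m invmx _ *m col_ebase _]mulmxA mulVmx ?col_ebase_unit // mulmx1.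
rewrite -[_ *m row_ebase _ *m invmx _]mulmxA mulmxV ?row_ebase_unit // mulmx1.
by rewrite !pid_mx_id ?rank_leq_row ?rank_leq_col // pid_mx_1.
Qed.

Lemma QXQ2 k : Q k *m X k *m Q2 k = 1%:M.
Proof. exact: QXQ2_gen. Qed.

Let g k (Z : 'M[C]_(r k)) : 'M[C]_d :=
  ptraceK (W k *m ((1%:M : 'M[C]_(dk k)) *t (adjmx (X k) *m (adjmx (Q k) *m Z *m Q k) *m X k))
     *m adjmx (W k)).
Let f k (u : 'rV[C]_(r k * r k)) : 'rV[C]_(d * d) := mxvec (g k (vec_mx u)).
Let B k := lin1_mx (f k).
Let M := \mxcol_k B k.

Lemma fD k x y : f k (x + y) = f k x + f k y.
Proof.
by rewrite /f /g linearD /= !(mulmxDr, mulmxDl) tensmxDr !(mulmxDr, mulmxDl) ptraceKD linearD.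
Qed.

Lemma fZ k a x : f k (a *: x) = a *: f k x.
Proof.
rewrite /f /g linearZ /= -!(scalemxAr, scalemxAl) tensmxZr -!(scalemxAr, scalemxAl).
by rewrite ptraceKZ linearZ.
Qed.

Lemma M_inj (u : 'rV[C]_(\sum_k (r k * r k))) : u *m M = 0 -> u = 0.
Proof.
move=> h; rewrite -(submxrowK u) in h *.
rewrite /M mul_mxrow_mxcol in h.
have h2 : mxvec (ptraceK (Wc (fun k => adjmx (X k) *m
          (adjmx (Q k) *m vec_mx (submxrow u k) *m Q k) *m X k))) = 0.
  rewrite -h; rewrite /commutant_elt ptraceK_sum raddf_sum.
  by apply: eq_bigr=> k _; rewrite /B mul_rV_lin1_gen //; [exact: fD | exact: fZ].
move/eqP: h2; rewrite mxvec_eq0 => /eqP /key hk.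
rewrite -[RHS](mxrow0 (q_ := fun k => (r k * r k)%N)); apply: eq_mxrow=> k.
have h3 : adjmx (Q k *m X k) *m vec_mx (submxrow u k) *m (Q k *m X k) = 0.
  by rewrite adjmxM !mulmxA; have := hk k; rewrite !mulmxA.
have PQ := QXQ2 k.
move: h3 PQ; set P := Q k *m X k; set P2 := Q2 k; clearbody P P2 => h3 PQ.
have h4 : vec_mx (submxrow u k) = 0.
  have : adjmx P2 *m (adjmx P *m vec_mx (submxrow u k) *m P) *m P2 = 0.
    by rewrite h3 mulmx0 mul0mx.
  by rewrite !mulmxA -adjmxM PQ adjmx1 mul1mx -mulmxA PQ mulmx1.
by rewrite -[submxrow u k]vec_mxK h4 linear0.
Qed.

Lemma M_free : row_free M.
Proof.
rewrite -kermx_eq0 -submx0; apply/row_subP=> i.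
have : row i (kermx M) *m M = 0 by apply/sub_kermxP; apply: row_sub.
by move/M_inj ->; rewrite sub0mx.
Qed.

Lemma count_main : (\sum_k \rank (X k) ^ 2 <= d ^ 2)%N.
Proof.
have := rank_leq_col M; move/eqP: M_free => ->.
move=> h; rewrite -mulnn; apply: leq_trans h.
by rewrite eq_leq //; apply: eq_bigr=> k _; rewrite mulnn.
Qed.

End Count.

Unset Implicit Arguments.
Set Strict Implicit.

Theorem mainTheorem13 (C : numClosedFieldType)
  (G : Type) (mul : G -> G -> G) (one : G) (inv : G -> G)
  (d e : nat) (U : G -> 'M[C]_d) (V : G -> 'M[C]_e) (K0 : 'M[C]_d)
  (n : nat) (dk mk : 'I_n -> nat)
  (pi : forall k, G -> 'M[C]_(dk k))
  (W : forall k, 'M[C]_(e * d, dk k * mk k))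
  (X : forall k, 'M[C]_(mk k)) :
  is_group mul one inv ->
  unitary_rep mul U -> unitary_rep mul V ->
  isotypic_decomposition mul U V pi W ->
  psdmx K0 -> psdmx (1%:M - K0) ->
  extremal (CK0 W K0)
    (adjmx (commutant_elt W X) *m commutant_elt W X) ->
  (\sum_(k < n | (X k != 0)%R) (\rank (X k)) ^ 2 <= d ^ 2)%N.
Proof.
move=> _ _ _ [[hpi _ _] [Wiso Worth _ _]] _ _ Hext.
have dkpos : forall k, (0 < dk k)%N by move=> k; case: (hpi k) => _ [].
have key := cplx_key Wiso Worth dkpos Hext.
apply: leq_trans (count_main _ _ _ _ _ _ _ _ key).
rewrite big_mkcond /=; apply: leq_sum => k _; by case: ifP.
Qed.
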